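(* For a parameter $p\in[1,2]$ with $p\neq 1.5$, Width-2-Johnson's algorithm with parameter $p$ does not achieve an approximation ratio of $3/4$ for weighted max-sat.
   Context: Weighted max-sat: clauses (sets of literals) with nonnegative weights; maximize the total weight of satisfied clauses. Width-2-Johnson's algorithm with parameter $p$ processes the variables $x_1,\dots,x_n$ in the given online order while maintaining two (partial) assignments $A_1,A_2$, initially empty. For a clause $C$ and a partial assignment, the measure $\mu(C)$ is the weight of $C$ times $2^{-l}$, where $l$ is the number of variables of $C$ not yet assigned; for a set of clauses the measure is the sum. When processing $x_i$, for each $D=(d_1,d_2)\in\{0,1\}^2$ let $C_1$ be the set of clauses that become satisfied by assigning $x_i$ to $d_1$ in $A_1$ and $C_2$ the set of clauses that become satisfied by assigning $x_i$ to $d_2$ in $A_2$, and set $f(D)=\mu(C_1\setminus C_2)+\mu(C_2\setminus C_1)+p\,\mu(C_1\cap C_2)$; then $x_i$ is assigned $d_1$ in $A_1$ and $d_2$ in $A_2$ for $D=\arg\max_D f(D)$. At the end the algorithm returns whichever of $A_1,A_2$ satisfies the larger total weight. The approximation ratio is $\inf_I v(\mathbb{A},I)/v(I)$. *)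

(* Defs.v *)
From mathcomp Require Import all_boot all_order all_algebra.
Set Implicit Arguments. Unset Strict Implicit. Unset Printing Implicit Defensive.
Import Order.TTheory GRing.Theory Num.Theory.
Local Open Scope ring_scope.

Section MaxSat.
Variable R : realFieldType.
Variable n : nat.

(* A literal is a pair (variable, sign); (v, b) is satisfied by an assignment
   a iff a v = b.  A clause is a finite set of literals. *)
Definition literal := ('I_n * bool)%type.
Definition clause := {set literal}.
Definition instance := seq (clause * R).

Definition weights_nonneg (I : instance) : Prop := forall c, c \in I -> 0 <= c.2.

Definition sat (a : 'I_n -> bool) (C : clause) : bool :=
  [exists l in C, a l.1 == l.2].

Definition value (I : instance) (a : 'I_n -> bool) : R :=
  \sum_(c <- I | sat a c.1) c.2.

Definition opt (I : instance) : R :=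
  \big[Num.max/0]_(a : {ffun 'I_n -> bool}) value I a.

(* Partial assignment at stage i: the variables with index < i are assigned
   (with the values of a); the others are unassigned. *)
Definition psat (i : nat) (a : 'I_n -> bool) (C : clause) : bool :=
  [exists l in C, (l.1 < i)%N && (a l.1 == l.2)].

Definition nunassigned (i : nat) (C : clause) : nat :=
  #|[set l.1 | l in C & (i <= l.1)%N]|.

Definition mu (i : nat) (c : clause * R) : R := c.2 * (2^-1) ^+ nunassigned i c.1.

Definition becomes_sat (i : 'I_n) (a : 'I_n -> bool) (d : bool) (C : clause) : bool :=
  ~~ psat i a C && ((i, d) \in C).

Definition fval (p : R) (I : instance) (i : 'I_n) (a1 a2 : 'I_n -> bool)
    (d1 d2 : bool) : R :=
  \sum_(c <- I)
    (if becomes_sat i a1 d1 c.1 && becomes_sat i a2 d2 c.1 then p * mu i c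
     else if becomes_sat i a1 d1 c.1 || becomes_sat i a2 d2 c.1 then mu i c
     else 0).

(* (a1, a2) is a possible final state of Width-2-Johnson's algorithm with
   parameter p processing x_0, ..., x_(n-1) in order: at every step i the
   chosen pair (a1 i, a2 i) is an argmax of f (any tie-breaking). *)
Definition johnson2_run (p : R) (I : instance) (a1 a2 : 'I_n -> bool) : Prop :=
  forall (i : 'I_n) (d1 d2 : bool),
    fval p I i a1 a2 d1 d2 <= fval p I i a1 a2 (a1 i) (a2 i).

Definition johnson2_value (I : instance) (a1 a2 : 'I_n -> bool) : R :=
  Num.max (value I a1) (value I a2).

End MaxSat.

(* Main.v *)
Require Import Defs.
From mathcomp Require Import all_boot all_order all_algebra.
From mathcomp Require Import lra.
From Stdlib Require Import FunctionalExtensionality.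
Import Order.TTheory GRing.Theory Num.Theory.
Local Open Scope ring_scope.
Set Implicit Arguments. Unset Strict Implicit.

Definition x0 : 'I_2 := ord0.
Definition x1 : 'I_2 := ord_max.

Section Eval.
Variable R : realFieldType.

Definition fterm (p : R) (b1 b2 : bool) (k : nat) (w : R) : R :=
  if b1 && b2 then p * (w * 2^-1 ^+ k) else if b1 || b2 then w * 2^-1 ^+ k else 0.

Definition info (i : 'I_2) (a1 a2 : 'I_2 -> bool) (d1 d2 : bool) (Cs : seq (clause 2)) :=
  map (fun C => (becomes_sat i a1 d1 C, becomes_sat i a2 d2 C, nunassigned i C)) Cs.

Fixpoint evalf (p : R) (l : seq (bool * bool * nat)) (ws : seq R) : R :=
  match l, ws with
  | (b1, b2, k) :: l', w :: ws' => fterm p b1 b2 k w + evalf p l' ws'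
  | _, _ => 0
  end.

Fixpoint evalv (l : seq bool) (ws : seq R) : R :=
  match l, ws with
  | b :: l', w :: ws' => (if b then w else 0) + evalv l' ws'
  | _, _ => 0
  end.

Lemma fval_eq (p : R) Cs ws i a1 a2 d1 d2 :
  fval p (zip Cs ws) i a1 a2 d1 d2 = evalf p (info i a1 a2 d1 d2 Cs) ws.
Proof.
elim: Cs ws => [|C Cs IH] [|w ws]; rewrite /fval ?big_nil //= big_cons -IH.
by [].
Qed.

Lemma value_eq Cs ws (a : 'I_2 -> bool) :
  value (zip Cs ws) a = evalv (map (fun C => sat a C) Cs) ws.
Proof.
elim: Cs ws => [|C Cs IH] [|w ws]; rewrite /value ?big_nil //= big_cons -IH /=.
by case: (sat a C); rewrite ?add0r.
Qed.

End Eval.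

Definition CsL : seq (clause 2) :=
  [:: [set (x0, false)]; [set (x0, true)]; [set (x1, false)]; [set (x1, true)];
      [set (x0, true); (x1, false)]].
Definition wsL (R : realFieldType) (p : R) : seq R :=
  [:: 1; p - 1; p - 1; 1; (3 - 2 * p) / 4].
Definition instL (R : realFieldType) (p : R) : instance R 2 := zip CsL (wsL p).

Definition CsG : seq (clause 2) :=
  [:: [set (x1, false)]; [set (x0, false); (x1, false)]; [set (x0, true); (x1, true)]].
Definition wsG (R : realFieldType) (p : R) : seq R :=
  [:: p - 1; (2 * p - 1) / 2; p - 1].
Definition instG (R : realFieldType) (p : R) : instance R 2 := zip CsG (wsG p).

Lemma opt_ge (R : realFieldType) n (I : instance R n) (a : {ffun 'I_n -> bool}) :
  value I a <= opt I.
Proof.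
rewrite /opt; have : a \in index_enum {ffun 'I_n -> bool} by rewrite mem_index_enum.
elim: (index_enum _) => //= x s IH; rewrite inE big_cons => /orP [/eqP <-|/IH h].
  by rewrite le_max lexx.
by rewrite le_max h orbT.
Qed.

Lemma fun2 (a : 'I_2 -> bool) :
  a = (fun i : 'I_2 => if val i == 0%N then a x0 else a x1).
Proof.
apply: functional_extensionality => -[[|[|k]] Hi] //=; congr a; exact: val_inj.
Qed.

Lemma bs1 (i : 'I_2) a d (v : 'I_2) b :
  becomes_sat i a d [set (v, b)] =
  ~~ ((v < i)%N && (a v == b)) && ((val i == val v) && (d == b)).
Proof.
rewrite /becomes_sat /psat; congr (~~ _ && _).
  apply/existsP/idP => [[l /andP [/set1P -> //]]|h].
  by exists (v, b); rewrite in_set1 eqxx.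
by rewrite in_set1 xpair_eqE.
Qed.

Lemma bs2 (i : 'I_2) a d (v w : 'I_2) b c :
  becomes_sat i a d [set (v, b); (w, c)] =
  ~~ (((v < i)%N && (a v == b)) || ((w < i)%N && (a w == c))) &&
  ((val i == val v) && (d == b) || (val i == val w) && (d == c)).
Proof.
rewrite /becomes_sat /psat; congr (~~ _ && _).
  apply/existsP/idP => [[l /andP [/set2P [->|->] ->]] //=|/orP [h|h]]; rewrite ?orbT //.
    by exists (v, b); rewrite in_set2 eqxx.
  by exists (w, c); rewrite in_set2 eqxx orbT.
by rewrite in_set2 !xpair_eqE.
Qed.

Lemma nu1 (i : nat) (v : 'I_2) b :
  nunassigned i [set (v, b)] = (i <= v)%N.
Proof.
rewrite /nunassigned.
case: leqP => h.
  rewrite (_ : [set _ | _ in _ & _] = [set v]) ?cards1 //.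
  apply/setP => x; rewrite in_set1; apply/imsetP/eqP => [[l]|->].
    by rewrite inE => /andP [/set1P -> _] ->.
  by exists (v, b); rewrite // inE in_set1 eqxx h.
rewrite (_ : [set _ | _ in _ & _] = set0) ?cards0 //.
apply/setP => x; rewrite in_set0; apply/imsetP => [[l]].
by rewrite inE => /andP [/set1P -> /=]; rewrite leqNgt h.
Qed.

Lemma nu2 (i : nat) (v w : 'I_2) b c : v != w ->
  nunassigned i [set (v, b); (w, c)] = ((i <= v)%N + (i <= w)%N)%N.
Proof.
move=> vw; rewrite /nunassigned.
rewrite (_ : [set _ | _ in _ & _] =
   [set x | ((x == v) && (i <= v)%N) || ((x == w) && (i <= w)%N)]).
  rewrite (_ : [set x | _] = (if (i <= v)%N then [set v] else set0) :|:
                             (if (i <= w)%N then [set w] else set0)).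
    rewrite cardsU.
    case: (i <= v)%N; case: (i <= w)%N; rewrite ?cards1 ?cards0 ?setI0 ?set0I ?cards0 ?subn0 //=.
    rewrite (_ : [set v] :&: [set w] = set0) ?cards0 //.
    by apply/setP => x; rewrite !inE; apply/negbTE; apply/andP => -[/eqP -> /eqP]; apply/eqP.
  apply/setP => x; rewrite !inE.
  by case: (i <= v)%N; case: (i <= w)%N; rewrite ?in_set1 ?in_set0 ?andbT ?andbF ?orbF.
apply/setP => x; rewrite inE; apply/imsetP/idP => [[l]|].
  rewrite inE => /andP [/set2P [->|->] h] -> /=; by rewrite eqxx h ?orbT.
case/orP => /andP [/eqP -> h].
  by exists (v, b); rewrite // inE in_set2 eqxx h.
by exists (w, c); rewrite // inE in_set2 eqxx h orbT.
Qed.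

Lemma sat1 (a : 'I_2 -> bool) (v : 'I_2) b : sat a [set (v, b)] = (a v == b).
Proof.
rewrite /sat; apply/existsP/idP => [[l /andP [/set1P -> //]]|h].
by exists (v, b); rewrite in_set1 eqxx.
Qed.

Lemma sat2 (a : 'I_2 -> bool) (v w : 'I_2) b c :
  sat a [set (v, b); (w, c)] = (a v == b) || (a w == c).
Proof.
rewrite /sat; apply/existsP/idP => [[l /andP [/set2P [->|->] ->]]|/orP [h|h]] //=; rewrite ?orbT //.
  by exists (v, b); rewrite in_set2 eqxx.
by exists (w, c); rewrite in_set2 eqxx orbT.
Qed.

Ltac crunch := rewrite ?fval_eq ?value_eq /info /CsL /CsG /= ?ffunE !bs2 !bs1 !nu2 // !nu1 !sat2 !sat1 /= /fterm /=.

Lemma opt_ge' (R : realFieldType) n (I : instance R n) (a : 'I_n -> bool) :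
  value I a <= opt I.
Proof.
have <- : value I (finfun a) = value I a.
  rewrite /value /sat; apply: eq_bigl => c /=.
  by apply/existsP/existsP => -[l h]; exists l; rewrite ?ffunE in h *.
exact: opt_ge.
Qed.

Theorem lemma3 (R : realFieldType) (p : R) :
  1 <= p <= 2 -> p != 3 / 2 ->
  exists (n : nat) (I : instance R n),
    weights_nonneg I /\
    forall a1 a2 : 'I_n -> bool,
      johnson2_run p I a1 a2 -> johnson2_value I a1 a2 < 3 / 4 * opt I.
Proof.
move=> /andP [p1 p2] p32.
have h34 : (0:R) <= 3/4 by lra.
have [hlt|hgt] : p < 3/2 \/ 3/2 < p.
  by move: p32; rewrite neq_lt => /orP [] ->; [left|right].
{ exists 2%N, (instL p); split.
    by apply/allP => /=; repeat (apply/andP; split) => //; lra.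
  move=> a1 a2 H.
  apply: (lt_le_trans _ (ler_wpM2l h34 (opt_ge' (instL p) (fun i : 'I_2 => val i != 0%N)))).
  rewrite (fun2 a1) (fun2 a2) in H *.
  move: (a1 x0) (a1 x1) (a2 x0) (a2 x1) H => b0 b1 c0 c1 H.
  have h1 := H x0 false false; have h2 := H x0 false true.
  have h3 := H x0 true false; have h4 := H x0 true true.
  have h5 := H x1 false false; have h6 := H x1 false true.
  have h7 := H x1 true false; have h8 := H x1 true true.
  clear H; move: h1 h2 h3 h4 h5 h6 h7 h8; rewrite /johnson2_value gt_max /instL.
  crunch.
  case: b0; case: b1; case: c0; case: c1.
  all: rewrite /= => h1 h2 h3 h4 h5 h6 h7 h8; apply/andP; split.
  all: try nra.
}
{ exists 2%N, (instG p); split.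
    by apply/allP => /=; repeat (apply/andP; split) => //; lra.
  move=> a1 a2 H.
  apply: (lt_le_trans _ (ler_wpM2l h34 (opt_ge' (instG p) (fun i : 'I_2 => val i == 0%N)))).
  rewrite (fun2 a1) (fun2 a2) in H *.
  move: (a1 x0) (a1 x1) (a2 x0) (a2 x1) H => b0 b1 c0 c1 H.
  have h1 := H x0 false false; have h2 := H x0 false true.
  have h3 := H x0 true false; have h4 := H x0 true true.
  have h5 := H x1 false false; have h6 := H x1 false true.
  have h7 := H x1 true false; have h8 := H x1 true true.
  clear H; move: h1 h2 h3 h4 h5 h6 h7 h8; rewrite /johnson2_value gt_max /instG.
  crunch.
  case: b0; case: b1; case: c0; case: c1.
  all: rewrite /= => h1 h2 h3 h4 h5 h6 h7 h8; apply/andP; split.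
  all: try nra.
}
Qed.
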